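(* Let $F$, $H$, $X$, $\Omega$, $Q$ and the sequences generated by the IneIREG method be as described in the context. Let $\varepsilon>0$ be a tolerance and $\mathcal D_0>0$ satisfy $\mathcal D_0\ge \overline\lambda C_HD_X/\underline\lambda$, and suppose $\eta_k\equiv\eta:=\varepsilon/(2\mathcal D_0)$ for all $k\ge0$; $\alpha_0\in[0,1]$ and $(\alpha_k)$ is nonincreasing; $\lambda_k\in[\underline\lambda,\overline\lambda]$ for all $k$ with $0<\underline\lambda\le\overline\lambda\le1/(L_F+\eta L_H)$; and $\hat s:=\sum_{k=0}^\infty\delta_k<+\infty$. For $k\ge1$ let $\Lambda_k=\sum_{j=0}^{k-1}\lambda_j$ and $\overline y_k=\Lambda_k^{-1}\sum_{j=0}^{k-1}\lambda_jy_j$. Then for all $$k\ge\max\Big\{\Big\lceil\frac{1}{\varepsilon^2}\Big(\frac{\mathcal D_0(D_X^2+\hat s)}{\underline\lambda}\Big)\Big\rceil,\ \Big\lceil\frac1\varepsilon\Big(\frac{D_X^2+\hat s}{\underline\lambda}\Big)\Big\rceil\Big\}$$ we have $-B_H\,\mathrm{dist}(\overline y_k,Q)\le\mathrm{Gap}(\overline y_k,H,Q)\le\varepsilon$ and $0\le\mathrm{Gap}(\overline y_k,F,X)\le\varepsilon$. Moreover, if $Q$ is $\sigma$-weakly sharp of order $\mathcal M\ge1$, then for such $k$, $\mathrm{Gap}(\overline y_k,H,Q)\ge-\big(B_H/\sigma^{1/\mathcal M}\big)\varepsilon^{1/\mathcal M}$.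
   Context: Work in $\mathbb{R}^n$ with Euclidean inner product $\langle\cdot,\cdot\rangle$ and norm $\|\cdot\|$. The maps $F\colon \mathrm{Dom}\,F\to\mathbb{R}^n$ and $H\colon\mathrm{Dom}\,H\to\mathbb{R}^n$ are monotone and Lipschitz continuous with constants $L_F>0$ and $L_H>0$. $X$ is a nonempty compact convex set and $\Omega$ a nonempty closed convex set with $X\subset\Omega\subset\mathrm{Dom}\,F\cap\mathrm{Dom}\,H$; $P_X,P_\Omega$ denote orthogonal projections. $Q:=\{x\in X:\langle F(x),y-x\rangle\ge0\ \forall y\in X\}$ is assumed nonempty. $D_X:=\sup_{x,y\in X}\|x-y\|$, $C_H:=\sup_{x\in X}\|H(x)\|$, $B_H:=\sup_{x\in Q}\|H(x)\|$, $\mathrm{dist}(y,Q)$ is the Euclidean distance to $Q$. $\mathrm{Gap}(z,H,Q):=\sup_{x\in Q}\langle H(x),z-x\rangle$, $\mathrm{Gap}(z,F,X):=\sup_{x\in X}\langle F(x),z-x\rangle$. $Q$ is $\sigma$-weakly sharp of order $\mathcal M\ge1$ ($\sigma>0$) if $\langle F(x),y-x\rangle\ge\sigma\,\mathrm{dist}(y,Q)^{\mathcal M}$ for all $x\in Q$, $y\in X$. IneIREG method: start with $x_0=x_{-1}\in X$; for $k=0,1,\dots$, with parameters $\alpha_k\ge0$, $\lambda_k>0$, $\eta_k>0$, set $w_k=x_k+\alpha_k(x_k-x_{k-1})$, $w'_k=P_\Omega(w_k)$, $y_k=P_X\big(w_k-\lambda_k(F(w'_k)+\eta_kH(w'_k))\big)$,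 $x_{k+1}=P_X\big(w_k-\lambda_k(F(y_k)+\eta_kH(y_k))\big)$. Also $\delta_k:=\alpha_k(1+\alpha_k)\|x_k-x_{k-1}\|^2$ for $k\ge0$. *)

(* Defs.v *)
From HB Require Import structures.
From mathcomp Require Import all_boot all_order all_algebra.
From mathcomp Require Import all_classical all_reals all_analysis.
Set Implicit Arguments. Unset Strict Implicit. Unset Printing Implicit Defensive.
Import Order.TTheory GRing.Theory Num.Theory.
Import numFieldNormedType.Exports.
Local Open Scope classical_set_scope.
Local Open Scope ring_scope.

Section Defs.
Variables (R : realType) (n : nat).
Local Notation vec := 'rV[R]_n.

Definition inner_prod (u v : vec) : R := \sum_(i < n) u 0 i * v 0 i.
Definition enorm (u : vec) : R := Num.sqrt (inner_prod u u).

Definition is_proj (A : set vec) (P : vec -> vec) : Prop :=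
  forall z, A (P z) /\ forall a, A a -> enorm (z - P z) <= enorm (z - a).

Definition monotone_op (D : set vec) (F : vec -> vec) : Prop :=
  forall x y, D x -> D y -> 0 <= inner_prod (F x - F y) (x - y).

Definition lipschitz_op (D : set vec) (F : vec -> vec) (L : R) : Prop :=
  forall x y, D x -> D y -> enorm (F x - F y) <= L * enorm (x - y).

Definition VIsol (F : vec -> vec) (X : set vec) : set vec :=
  [set x | X x /\ forall y, X y -> 0 <= inner_prod (F x) (y - x)].

Definition diam_set (X : set vec) : R :=
  sup [set enorm (x - y) | x in X & y in X].

Definition sup_norm (H : vec -> vec) (A : set vec) : R :=
  sup [set enorm (H x) | x in A].

Definition dist_set (y : vec) (A : set vec) : R :=
  inf [set enorm (y - x) | x in A].

Definition gap_fn (z : vec) (H : vec -> vec) (A : set vec) : R :=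
  sup [set inner_prod (H x) (z - x) | x in A].

Definition weakly_sharp (F : vec -> vec) (X Q : set vec) (sigma M : R) : Prop :=
  forall x y, Q x -> X y -> sigma * (dist_set y Q `^ M) <= inner_prod (F x) (y - x).

End Defs.

(* Main.v *)
Require Import Defs.
From HB Require Import structures.
From mathcomp Require Import all_boot all_order all_algebra.
From mathcomp Require Import all_classical all_reals all_analysis.
From mathcomp Require Import ring lra.
Import Order.TTheory GRing.Theory Num.Theory.
Import numFieldNormedType.Exports.
Local Open Scope classical_set_scope.
Local Open Scope ring_scope.

Section IP.
Context {R : realType} {n : nat}.
Local Notation vec := 'rV[R]_n.
Local Notation ip := (@inner_prod R n).

Lemma ipC (u v : vec) : ip u v = ip v u.
Proof. by rewrite /inner_prod; apply: eq_bigr => i _; rewrite mulrC. Qed.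
Lemma ipDl (u v w : vec) : ip (u + v) w = ip u w + ip v w.
Proof. by rewrite /inner_prod -big_split; apply: eq_bigr => i _; rewrite mxE mulrDl. Qed.
Lemma ipDr (u v w : vec) : ip w (u + v) = ip w u + ip w v.
Proof. by rewrite ipC ipDl !(ipC w). Qed.
Lemma ipZl a (u w : vec) : ip (a *: u) w = a * ip u w.
Proof. by rewrite /inner_prod mulr_sumr; apply: eq_bigr => i _; rewrite mxE mulrA. Qed.
Lemma ipZr a (u w : vec) : ip w (a *: u) = a * ip w u.
Proof. by rewrite ipC ipZl ipC. Qed.
Lemma ipNl (u w : vec) : ip (- u) w = - ip u w.
Proof. by rewrite -scaleN1r ipZl mulN1r. Qed.
Lemma ipNr (u w : vec) : ip w (- u) = - ip w u.
Proof. by rewrite ipC ipNl ipC. Qed.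
Lemma ipBl (u v w : vec) : ip (u - v) w = ip u w - ip v w.
Proof. by rewrite ipDl ipNl. Qed.
Lemma ipBr (u v w : vec) : ip w (u - v) = ip w u - ip w v.
Proof. by rewrite ipDr ipNr. Qed.
Lemma ip0r (w : vec) : ip w 0 = 0.
Proof. by rewrite -(scale0r 0) ipZr mul0r. Qed.

Lemma ip_ge0 (u : vec) : 0 <= ip u u.
Proof. by apply: sumr_ge0 => i _; rewrite -expr2 sqr_ge0. Qed.

Lemma enorm_ge0 (u : vec) : 0 <= enorm u.
Proof. exact: sqrtr_ge0. Qed.

Lemma enorm_sq (u : vec) : enorm u ^+ 2 = ip u u.
Proof. by rewrite sqr_sqrtr // ip_ge0. Qed.

Definition c_of (u v : vec) := ip u v.

Lemma quad_disc (a b c : R) : 0 <= c -> (forall t, 0 <= a - 2 * b * t + c * t ^+ 2) ->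
  b ^+ 2 <= a * c.
Proof.
move=> c0 H.
have [cz|cp] := eqVneq c 0.
  have [bz|bn] := eqVneq b 0; first by rewrite bz cz; lra.
  have := H ((a + 1) / (2 * b)); rewrite cz mul0r addr0.
  have -> : 2 * b * ((a + 1) / (2 * b)) = a + 1 by field; rewrite bn.
  lra.
have cpos : 0 < c by rewrite lt_def cp c0.
have := H (b / c).
have -> : a - 2 * b * (b / c) + c * (b / c) ^+ 2 = (a * c - b ^+ 2) / c.
  by field; rewrite cp.
by rewrite pmulr_lge0 ?invr_gt0 // subr_ge0.
Qed.

Lemma CS2 (u v : vec) : ip u v ^+ 2 <= ip u u * ip v v.
Proof.
apply: quad_disc; first exact: ip_ge0.
move=> t; have := ip_ge0 (u - t *: v).
rewrite !(ipBl, ipBr, ipZl, ipZr) (ipC v u).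
move=> h; apply: le_trans h _; rewrite le_eqVlt; apply/orP; left; apply/eqP; ring.
Qed.

Lemma CS (u v : vec) : ip u v <= enorm u * enorm v.
Proof.
rewrite /enorm -sqrtrM ?ip_ge0 //.
apply: le_trans (ler_norm _) _.
by rewrite -sqrtr_sqr ler_sqrt ?mulr_ge0 ?ip_ge0 // CS2.
Qed.

Lemma CSabs (u v : vec) : `|ip u v| <= enorm u * enorm v.
Proof.
rewrite ler_norml CS andbT lerNl -ipNl.
apply: le_trans (CS _ _) _.
by rewrite /enorm ipNl ipNr opprK.
Qed.

Lemma enormN (u : vec) : enorm (- u) = enorm u.
Proof. by rewrite /enorm ipNl ipNr opprK. Qed.

Lemma enormD (u v : vec) : enorm (u + v) <= enorm u + enorm v.
Proof.
rewrite -(ler_pXn2r (n:=2)) // ?nnegrE ?addr_ge0 ?enorm_ge0 //.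
rewrite enorm_sq sqrrD !enorm_sq !(ipDl, ipDr) (ipC v u).
have := CS u v; lra.
Qed.

Lemma enormB (u v : vec) : enorm (u - v) <= enorm u + enorm v.
Proof. by rewrite -(enormN v); apply: enormD. Qed.

Lemma enorm_le (u v : vec) : (enorm u <= enorm v) = (ip u u <= ip v v).
Proof. by rewrite /enorm ler_sqrt // ip_ge0. Qed.

Lemma ip_sub_aux (u v : vec) t : ip u u <= ip (u - t *: v) (u - t *: v) ->
  2 * ip u v * t <= ip v v * t ^+ 2.
Proof.
rewrite !(ipBl, ipBr, ipZl, ipZr) [ip v u]ipC expr2; lra.
Qed.

Lemma convex_mem (X : set vec) a b t : convex_set X -> X a -> X b -> 0 <= t -> t <= 1 ->
  X (t *: a + (1 - t) *: b).
Proof.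
move=> cX Xa Xb t0 t1.
have := cX a b (Itv01 t0 t1) (mem_set Xa) (mem_set Xb).
by rewrite inE.
Qed.

Lemma proj_vi (A : set vec) P z a : convex_set A -> is_proj A P -> A a ->
  ip (z - P z) (a - P z) <= 0.
Proof.
move=> cA hP Aa.
have [AP Pmin] := hP z.
set c := ip (z - P z) (a - P z).
set K := ip (a - P z) (a - P z).
have K0 : 0 <= K by exact: ip_ge0.
have key : forall t, 0 <= t -> t <= 1 -> 2 * c * t <= K * t ^+ 2.
  move=> t t0 t1.
  have := Pmin _ (@convex_mem A a (P z) t cA Aa AP t0 t1).
  have -> : z - (t *: a + (1 - t) *: P z) = (z - P z) - t *: (a - P z).
    by apply/rowP => i; rewrite !mxE; ring.
  rewrite enorm_le => /ip_sub_aux; rewrite -/c -/K => h; exact: h.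
rewrite leNgt; apply/negP => cpos.
have Kc : 0 < K + c by lra.
have := key (c / (K + c)).
rewrite divr_ge0 ?(ltW cpos) ?(ltW Kc) // ler_pdivrMr // mul1r.
have -> : K * (c / (K + c)) ^+ 2 = c * (K / (K + c)) * (c / (K + c)) by rewrite expr2; field; lra.
have h1 : K / (K + c) <= 1 by rewrite ler_pdivrMr // mul1r; lra.
have h2 : 0 <= c / (K + c) by rewrite divr_ge0 // ?ltW.
move=> /(_ ltac:(lra)).
have h3 : c * (K / (K + c)) <= c by rewrite ler_piMr // ?ltW.
have h4 : c * (K / (K + c)) * (c / (K + c)) <= c * (c / (K + c)) by rewrite ler_wpM2r.
have h5 : 0 < c / (K + c) by rewrite divr_gt0.
nra.
Qed.



Lemma ip_sumr (g : vec) k (f : nat -> vec) :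
  ip g (\sum_(j < k) f j) = \sum_(j < k) ip g (f j).
Proof.
elim: k => [|k IH]; first by rewrite !big_ord0 ip0r.
by rewrite !big_ord_recr /= ipDr IH.
Qed.

Lemma inert (u v : vec) (al : R) :
  ip ((1 + al) *: u - al *: v) ((1 + al) *: u - al *: v) =
  (1 + al) * ip u u - al * ip v v + al * (1 + al) * ip (u - v) (u - v).
Proof. rewrite !(ipBl, ipBr, ipZl, ipZr) [ip v u]ipC; ring. Qed.

Lemma coord_le (u : vec) i : `|u 0 i| <= `|u|.
Proof.
have -> : `|u| = mx_norm u by [].
rewrite mx_normrE; apply/bigmax_geP; right; exists (0, i) => //.
Qed.

Lemma enorm_le_mx (u : vec) : enorm u <= n%:R * `|u|.
Proof.
apply: (@le_trans _ _ (Num.sqrt ((n%:R * `|u|) ^+ 2))); last first.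
  by rewrite sqrtr_sqr ger0_norm // mulr_ge0.
rewrite /enorm ler_sqrt ?sqr_ge0 //.
apply: (@le_trans _ _ (\sum_(i < n) `|u|^+2)).
  apply: ler_sum => i _; rewrite -expr2 -real_normK ?num_real //.
  by rewrite lerXn2r ?nnegrE ?coord_le.
rewrite sumr_const card_ord -[_ *+ n]mulr_natl exprMn ler_wpM2r ?sqr_ge0 //.
case: n => [|m]; first by rewrite expr2 mul0r.
by rewrite expr2 ler_peMl // ?ler1n.
Qed.

Lemma bounded_enorm (X : set vec) : compact X -> exists M, forall x, X x -> enorm x <= M.
Proof.
move=> /compact_bounded [M0 [M0r HM0]].
exists (n%:R * (M0 + 1)) => x Xx.
apply: le_trans (enorm_le_mx x) _.
apply: ler_wpM2l => //; apply: (HM0 (M0 + 1)) => //.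
by rewrite ltrDl.
Qed.

End IP.

Lemma sup_img_ub {R : realType} {T} (A : set T) (f : T -> R) B :
  (forall x, A x -> f x <= B) -> forall x, A x -> f x <= sup [set f x | x in A].
Proof.
move=> hB x Ax; apply: ub_le_sup; last by exists x.
by exists B => _ [y Ay <-]; apply: hB.
Qed.

Lemma sup_img_le {R : realType} {T} (A : set T) (f : T -> R) B :
  A !=set0 -> (forall x, A x -> f x <= B) -> sup [set f x | x in A] <= B.
Proof.
move=> [x0 Ax0] hB; apply: ge_sup; first by exists (f x0), x0.
by move=> _ [y Ay <-]; apply: hB.
Qed.

Lemma inf_img_ge {R : realType} {T} (A : set T) (f : T -> R) B :
  A !=set0 -> (forall x, A x -> B <= f x) -> B <= inf [set f x | x in A].
Proof.
move=> [x0 Ax0] hB; apply: lb_le_inf; first by exists (f x0), x0.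
by move=> _ [y Ay <-]; apply: hB.
Qed.

Section IP2.
Context {R : realType} {n : nat}.
Local Notation vec := 'rV[R]_n.
Local Notation ip := (@inner_prod R n).

Lemma step (X Om : set vec) PX PO (w y x1 x p p' : vec) :
  convex_set X -> convex_set Om -> is_proj X PX -> is_proj Om PO -> X `<=` Om ->
  y = PX (w - p') -> x1 = PX (w - p) -> X x ->
  2 * ip (p - p') (y - x1) <= ip (y - PO w) (y - PO w) + ip (y - x1) (y - x1) ->
  2 * ip p (y - x) <= ip (w - x) (w - x) - ip (x1 - x) (x1 - x).
Proof.
move=> cX cO pX pO XO yE x1E Xx h3.
have Xy : X y by rewrite yE; case: (pX (w - p')).
have Xx1 : X x1 by rewrite x1E; case: (pX (w - p)).
have h1 := @proj_vi R n X PX (w - p) x cX pX Xx; rewrite -x1E in h1.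
have h2 := @proj_vi R n X PX (w - p') x1 cX pX Xx1; rewrite -yE in h2.
have h4 := @proj_vi R n Om PO w y cO pO (XO _ Xy).
have h5 := @ip_ge0 R n (w - PO w).
move: h1 h2 h3 h4 h5; set w' := PO w => h1 h2 h3 h4 h5.
move: h1 h2 h3 h4 h5; rewrite !(ipBl, ipBr, ipDl, ipDr) => h1 h2 h3 h4 h5.
have s1 := @ipC R n w p.
have s2 := @ipC R n w p'.
have s3 := @ipC R n w x1.
have s4 := @ipC R n w y.
have s5 := @ipC R n w x.
have s6 := @ipC R n w w'.
have s7 := @ipC R n p p'.
have s8 := @ipC R n p x1.
have s9 := @ipC R n p y.
have s10 := @ipC R n p x.
have s11 := @ipC R n p w'.
have s12 := @ipC R n p' x1.
have s13 := @ipC R n p' y.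
have s14 := @ipC R n p' x.
have s15 := @ipC R n p' w'.
have s16 := @ipC R n x1 y.
have s17 := @ipC R n x1 x.
have s18 := @ipC R n x1 w'.
have s19 := @ipC R n y x.
have s20 := @ipC R n y w'.
have s21 := @ipC R n x w'.
lra.
Qed.

Lemma conv_comb (X : set vec) (lam : nat -> R) (y : nat -> vec) :
  convex_set X -> (forall j, 0 < lam j) -> (forall j, X (y j)) ->
  forall k, (0 < k)%N -> X ((\sum_(j < k) lam j)^-1 *: \sum_(j < k) lam j *: y j).
Proof.
move=> cX lp Xy; elim => [//|k IH] _.
rewrite !big_ord_recr /=.
have [k0|kp] := eqVneq k 0%N.
  subst k; rewrite !big_ord0 !add0r scalerA mulVf ?scale1r //.
  by rewrite gt_eqF.
have {}IH := IH ltac:(by rewrite lt0n).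
set L := \sum_(j < k) lam j in IH *.
set S := \sum_(j < k) lam j *: y j in IH *.
have L0 : 0 < L.
  rewrite /L; case: k kp {IH L S} => // k _.
  by rewrite big_ord_recr /= ltr_wpDl ?lp // sumr_ge0 // => i _; apply: ltW.
have Lk : 0 < L + lam k by rewrite addr_gt0.
have t0 : 0 <= lam k / (L + lam k) by rewrite divr_ge0 ?ltW.
have t1 : lam k / (L + lam k) <= 1 by rewrite ler_pdivrMr // mul1r lerDr ltW.
have := @convex_mem R n X (y k) (L^-1 *: S) _ cX (Xy k) IH t0 t1.
congr X; apply/rowP => i; rewrite !mxE.
field; rewrite !gt_eqF //.
Qed.

End IP2.

Lemma telesc (R : realType) (a d al c : nat -> R) (Dsq s : R) :
  (forall j, 0 <= a j) -> (forall j, a j <= Dsq) -> al 0%N <= 1 ->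
  (forall j, 0 <= al j) -> (forall j, al j.+1 <= al j) ->
  (forall j, c j <= (1 + al j) * a j - al j * a j.-1 + d j - a j.+1) ->
  (forall N, \sum_(j < N) d j <= s) ->
  forall k, \sum_(j < k) c j <= Dsq + s.
Proof.
move=> a0 aD al1 al0 aln hc hs.
have inv : forall k, \sum_(j < k) c j + a k - al k * a k.-1 <=
    (1 - al 0%N) * a 0%N + \sum_(j < k) d j + (al 0%N - al k) * Dsq.
  elim=> [|k IH]; first by rewrite !big_ord0 /=; lra.
  rewrite !big_ord_recr /=.
  have h1 := hc k; have h2 := aln k.
  have h3 : (al k - al k.+1) * a k <= (al k - al k.+1) * Dsq.
    by rewrite ler_wpM2l // subr_ge0.
  lra.
move=> k; have h1 := inv k; have h2 := hs k.
have h3 : (1 - al 0%N) * a 0%N <= (1 - al 0%N) * Dsq by rewrite ler_wpM2l // subr_ge0.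
have h4 : al k * a k.-1 <= al k * Dsq by rewrite ler_wpM2l.
have h5 := a0 k.
lra.
Qed.

Lemma psum_le (R : realType) (d : nat -> R) s : (forall j, 0 <= d j) ->
  (fun N : nat => \sum_(0 <= k < N) d k) @ \oo --> s -> forall N, \sum_(j < N) d j <= s.
Proof.
move=> d0 hc N.
have nd : nondecreasing_seq (fun N : nat => \sum_(0 <= k < N) d k).
  by apply/nondecreasing_seqP => m; rewrite big_nat_recr //= lerDl.
have := nondecreasing_cvgn_le nd (cvgP _ hc) N.
by rewrite (cvg_lim _ hc) // big_mkord.
Qed.

Lemma ceil_nat (R : realType) (c : R) (k : nat) : Num.ceil c <= k%:Z -> c <= k%:R.
Proof.
move=> h; apply: le_trans (Num.Theory.ceil_ge c) _.
by rewrite -(ler_int R) in h.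
Qed.

Theorem theorem3p13 (R : realType) (n : nat)
  (F H : 'rV[R]_n -> 'rV[R]_n) (DomF DomH X Omega : set 'rV[R]_n)
  (LF LH : R) (PX POmega : 'rV[R]_n -> 'rV[R]_n)
  (x y w : nat -> 'rV[R]_n) (alpha lambda eta : nat -> R)
  (eps D0 lam_lo lam_hi shat : R) :
  (* monotone Lipschitz operators *)
  monotone_op DomF F -> monotone_op DomH H ->
  0 < LF -> 0 < LH -> lipschitz_op DomF F LF -> lipschitz_op DomH H LH ->
  (* the sets *)
  X !=set0 -> compact X -> convex_set X ->
  Omega !=set0 -> closed Omega -> convex_set Omega ->
  X `<=` Omega -> Omega `<=` DomF `&` DomH ->
  is_proj X PX -> is_proj Omega POmega ->
  VIsol F X !=set0 ->
  (* IneIREG iterates, with x_{-1} = x_0 encoded as x (k.-1) *)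
  X (x 0%N) ->
  (forall k, 0 <= alpha k) -> (forall k, 0 < lambda k) -> (forall k, 0 < eta k) ->
  (forall k, w k = x k + alpha k *: (x k - x k.-1)) ->
  (forall k, y k = PX (w k - lambda k *: (F (POmega (w k)) + eta k *: H (POmega (w k))))) ->
  (forall k, x k.+1 = PX (w k - lambda k *: (F (y k) + eta k *: H (y k)))) ->
  (* parameter choices *)
  0 < eps -> 0 < D0 ->
  lam_hi * sup_norm H X * diam_set X / lam_lo <= D0 ->
  (forall k, eta k = eps / (2 * D0)) ->
  alpha 0%N <= 1 -> (forall k, alpha k.+1 <= alpha k) ->
  0 < lam_lo -> lam_lo <= lam_hi -> lam_hi <= 1 / (LF + eps / (2 * D0) * LH) ->
  (forall k, lam_lo <= lambda k <= lam_hi) ->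
  (fun N : nat => \sum_(0 <= k < N)
       (alpha k * (1 + alpha k) * enorm (x k - x k.-1) ^+ 2)) @ \oo --> shat ->
  forall k : nat, (1 <= k)%N ->
  Num.ceil ((D0 * (diam_set X ^+ 2 + shat) / lam_lo) / eps ^+ 2) <= k%:Z ->
  Num.ceil (((diam_set X ^+ 2 + shat) / lam_lo) / eps) <= k%:Z ->
  let ybar := (\sum_(j < k) lambda j)^-1 *: \sum_(j < k) lambda j *: y j in
  let Q := VIsol F X in
  [/\ - sup_norm H Q * dist_set ybar Q <= gap_fn ybar H Q,
      gap_fn ybar H Q <= eps,
      0 <= gap_fn ybar F X,
      gap_fn ybar F X <= eps &
      forall sigma M : R, 0 < sigma -> 1 <= M -> weakly_sharp F X Q sigma M ->
        - (sup_norm H Q / sigma `^ (1 / M)) * eps `^ (1 / M) <= gap_fn ybar H Q].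
Proof.
move=> monF monH LF0 LH0 lipF lipH Xne cX cvX Omne clO cvO XO OD pX pO Qne Xx0
  al0 lam0 eta0 wE yE xE eps0 D00 hD0 etaE a01 anoni lamlo0 lamlohi lamhiL lamb
  hcvg k k1 ceil1 ceil2 ybar Q.
pose et := eps / (2 * D0).
have et0 : 0 < et by rewrite /et divr_gt0 // mulr_gt0.
pose L := LF + et * LH.
have L0 : 0 < L by rewrite /L addr_gt0 // mulr_gt0.
have lamL : forall j, lambda j * L <= 1.
  move=> j; have := lamhiL; rewrite ler_pdivlMr // => h.
  apply: le_trans h; apply: ler_wpM2r; first exact: ltW.
  by case/andP: (lamb j).
have yE' : forall j, y j = PX (w j - lambda j *: (F (POmega (w j)) + et *: H (POmega (w j)))).
  by move=> j; rewrite yE etaE.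
have xE' : forall j, x j.+1 = PX (w j - lambda j *: (F (y j) + et *: H (y j))).
  by move=> j; rewrite xE etaE.
have Xx : forall j, X (x j).
  by elim=> [//|j IH]; rewrite xE; case: (pX (w j - lambda j *: (F (y j) + eta j *: H (y j)))).
have Xy : forall j, X (y j).
  by move=> j; rewrite yE; case: (pX (w j - lambda j *: (F (POmega (w j)) + eta j *: H (POmega (w j))))).
have XF : forall v, X v -> DomF v by move=> v /XO /OD [].
have XH : forall v, X v -> DomH v by move=> v /XO /OD [].
have OF : forall v, Omega v -> DomF v by move=> v /OD [].
have OH : forall v, Omega v -> DomH v by move=> v /OD [].
have Ow : forall j, Omega (POmega (w j)) by move=> j; case: (pO (w j)).
have [Mb hMb] := @bounded_enorm R n X cX.
have [x0 Xx0'] := Xne.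
pose D := diam_set X.
have hD : forall a b, X a -> X b -> enorm (a - b) <= D.
  move=> a b Xa Xb; rewrite /D /diam_set; apply: ub_le_sup.
    exists (Mb + Mb) => _ [a' Xa' [b' Xb' <-]].
    by apply: le_trans (enormB _ _) _; rewrite lerD ?hMb.
  by exists a => //; exists b.
have D_ge0 : 0 <= D by apply: le_trans (hD _ _ Xx0' Xx0'); apply: enorm_ge0.
have boundH : forall v, X v -> enorm (H v) <= enorm (H x0) + LH * D.
  move=> v Xv; have -> : H v = H x0 + (H v - H x0) by rewrite addrC subrK.
  apply: le_trans (enormD _ _) _; rewrite lerD2l.
  apply: le_trans (lipH _ _ (XH _ Xv) (XH _ Xx0')) _.
  by apply: ler_wpM2l; [exact: ltW | exact: hD].
pose CH := sup_norm H X.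
have hCH : forall v, X v -> enorm (H v) <= CH.
  by move=> v Xv; apply: (@sup_img_ub R _ X (fun v => enorm (H v)) _ boundH).
have CH0 : 0 <= CH by apply: le_trans (hCH _ Xx0'); apply: enorm_ge0.
have QX : forall v, Q v -> X v by move=> v [].
pose BH := sup_norm H Q.
have hBH : forall v, Q v -> enorm (H v) <= BH.
  by move=> v Qv; apply: (@sup_img_ub R _ Q (fun v => enorm (H v)) _ (fun v Qv => boundH v (QX v Qv))).
have [q0 Qq0] := Qne.
have BH0 : 0 <= BH by apply: le_trans (hBH _ Qq0); apply: enorm_ge0.
have Xyb : X ybar by exact: (@conv_comb R n X lambda y cvX lam0 Xy k k1).
pose Lam := \sum_(j < k) lambda j.
have Lamk : k%:R * lam_lo <= Lam.
  have -> : k%:R * lam_lo = \sum_(j < k) lam_lo by rewrite sumr_const card_ord mulr_natl.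
  by apply: ler_sum => j _; case/andP: (lamb j).
have Lam0 : 0 < Lam.
  apply: lt_le_trans Lamk; rewrite mulr_gt0 // ltr0n; exact: k1.
pose G := fun v => F v + et *: H v.
have key : forall xx, X xx -> 2 * Lam * inner_prod (G xx) (ybar - xx) <= D ^+ 2 + shat.
  move=> xx Xxx.
  have hs := @telesc R (fun j => inner_prod (x j - xx) (x j - xx))
    (fun j => alpha j * (1 + alpha j) * enorm (x j - x j.-1) ^+ 2) alpha
    (fun j => 2 * lambda j * inner_prod (G xx) (y j - xx)) (D ^+ 2) shat.
  have {}hs := hs (fun j => ip_ge0 _).
  have aD : forall j, inner_prod (x j - xx) (x j - xx) <= D ^+ 2.
    move=> j; rewrite -enorm_sq !expr2.
    by apply: ler_pM; rewrite ?enorm_ge0 ?hD.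
  have dnn : forall j, 0 <= alpha j * (1 + alpha j) * enorm (x j - x j.-1) ^+ 2.
    move=> j; apply: mulr_ge0; last exact: sqr_ge0.
    by apply: mulr_ge0 => //; apply: addr_ge0.
  have {}hs := hs aD a01 al0 anoni.
  have hc : forall j, 2 * lambda j * inner_prod (G xx) (y j - xx) <=
      (1 + alpha j) * inner_prod (x j - xx) (x j - xx) -
      alpha j * inner_prod (x j.-1 - xx) (x j.-1 - xx) +
      alpha j * (1 + alpha j) * enorm (x j - x j.-1) ^+ 2 -
      inner_prod (x j.+1 - xx) (x j.+1 - xx).
    move=> j.
    pose p := lambda j *: G (y j).
    pose p' := lambda j *: G (POmega (w j)).
    have h3 : 2 * inner_prod (p - p') (y j - x j.+1) <=
        inner_prod (y j - POmega (w j)) (y j - POmega (w j)) +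
        inner_prod (y j - x j.+1) (y j - x j.+1).
      have -> : p - p' = lambda j *: (F (y j) - F (POmega (w j))) +
          (lambda j * et) *: (H (y j) - H (POmega (w j))).
        by apply/rowP => i; rewrite !mxE; ring.
      rewrite -!enorm_sq ipDl !ipZl.
      have e10 := enorm_ge0 (y j - POmega (w j)).
      have e20 := enorm_ge0 (y j - x j.+1).
      move: e10 e20.
      set e1 := enorm (y j - POmega (w j)); set e2 := enorm (y j - x j.+1) => e10 e20.
      have hA : inner_prod (F (y j) - F (POmega (w j))) (y j - x j.+1) <= LF * e1 * e2.
        apply: le_trans (CS _ _) _; apply: ler_wpM2r => //.
        exact: (lipF _ _ (XF _ (Xy j)) (OF _ (Ow j))).
      have hB : inner_prod (H (y j) - H (POmega (w j))) (y j - x j.+1) <= LH * e1 * e2.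
        apply: le_trans (CS _ _) _; apply: ler_wpM2r => //.
        exact: (lipH _ _ (XH _ (Xy j)) (OH _ (Ow j))).
      have hA' := ler_wpM2l (ltW (lam0 j)) hA.
      have hB' := ler_wpM2l (mulr_ge0 (ltW (lam0 j)) (ltW et0)) hB.
      have hL := ler_piMl (mulr_ge0 e10 e20) (lamL j).
      have sq := sqr_ge0 (e1 - e2).
      rewrite /L in hL.
      lra.
    have st := @step R n X Omega PX POmega (w j) (y j) (x j.+1) xx p p' cvX cvO pX pO XO
      (yE' j) (xE' j) Xxx h3.
    have mon : inner_prod (G xx) (y j - xx) <= inner_prod (G (y j)) (y j - xx).
      have m1 := monF (y j) xx (XF _ (Xy j)) (XF _ Xxx).
      have m2 := monH (y j) xx (XH _ (Xy j)) (XH _ Xxx).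
      rewrite /G !ipDl !ipZl; rewrite ipBl in m1; rewrite ipBl in m2.
      have : et * inner_prod (H xx) (y j - xx) <= et * inner_prod (H (y j)) (y j - xx).
        by apply: ler_wpM2l; [exact: ltW | lra].
      lra.
    have hmon2 : 2 * lambda j * inner_prod (G xx) (y j - xx) <= 2 * inner_prod p (y j - xx).
      rewrite /p ipZl mulrA; apply: ler_wpM2l => //.
      by apply: mulr_ge0 => //; exact: ltW.
    have iw : inner_prod (w j - xx) (w j - xx) =
        (1 + alpha j) * inner_prod (x j - xx) (x j - xx) -
        alpha j * inner_prod (x j.-1 - xx) (x j.-1 - xx) +
        alpha j * (1 + alpha j) * enorm (x j - x j.-1) ^+ 2.
      have -> : w j - xx = (1 + alpha j) *: (x j - xx) - alpha j *: (x j.-1 - xx).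
        by rewrite wE; apply/rowP => i; rewrite !mxE; ring.
      rewrite inert enorm_sq.
      have -> : (x j - xx) - (x j.-1 - xx) = x j - x j.-1.
        by apply/rowP => i; rewrite !mxE; ring.
      by [].
    lra.
  have {hc}hs := hs hc (@psum_le R _ _ dnn hcvg) k.
  apply: le_trans hs; rewrite le_eqVlt; apply/orP; left; apply/eqP.
  rewrite /ybar ipBr ipZr (ip_sumr _ _ (fun j => lambda j *: y j)).
  set g := G xx.
  rewrite [X in _ = X](eq_bigr (fun j : 'I_k => 2 * (lambda j * inner_prod g (y j)) - 2 * inner_prod g xx * lambda j)); last first.
    by move=> j _; rewrite ipBr; ring.
  rewrite sumrB -!mulr_sumr.
  have e1 : \sum_(j < k) inner_prod g (lambda j *: y j) = \sum_(j < k) lambda j * inner_prod g (y j).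
    by apply: eq_bigr => j _; rewrite ipZr.
  rewrite e1.
  rewrite -/Lam; field; rewrite gt_eqF //.
have Lk1 : D ^+ 2 + shat <= eps * Lam.
  have := @ceil_nat R _ _ ceil2; rewrite -/D ler_pdivrMr // ler_pdivrMr // => h.
  have := ler_wpM2l (ltW eps0) Lamk; lra.
have Lk2 : D0 * (D ^+ 2 + shat) <= eps ^+ 2 * Lam.
  have := @ceil_nat R _ _ ceil1; rewrite -/D ler_pdivrMr ?exprn_gt0 // ler_pdivrMr // => h.
  have := ler_wpM2l (ltW (exprn_gt0 2 eps0)) Lamk; lra.
have Gb : forall xx, X xx -> inner_prod (G xx) (ybar - xx) <= eps / 2.
  move=> xx Xxx; have h := key xx Xxx.
  rewrite -(ler_pM2l Lam0); lra.
have CHD : CH * D <= D0.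
  move: hD0; rewrite -/CH -/D ler_pdivrMr // => h.
  have h' : lam_lo * (CH * D) <= lam_hi * (CH * D) by apply: ler_wpM2r => //; exact: mulr_ge0.
  rewrite -(ler_pM2l lamlo0); lra.
have etD0 : et * D0 = eps / 2 by rewrite /et; field; rewrite gt_eqF.
have Fb : forall xx, X xx -> inner_prod (F xx) (ybar - xx) <= eps.
  move=> xx Xxx.
  have e : inner_prod (F xx) (ybar - xx) = inner_prod (G xx) (ybar - xx) - et * inner_prod (H xx) (ybar - xx).
    by rewrite /G ipDl ipZl; ring.
  have := CSabs (H xx) (ybar - xx); rewrite ler_norml => /andP[hl _].
  have hb : enorm (H xx) * enorm (ybar - xx) <= CH * D.
    by apply: ler_pM; rewrite ?enorm_ge0 ?hCH ?hD.
  have h1 : - (et * inner_prod (H xx) (ybar - xx)) <= et * (CH * D).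
    rewrite -mulrN; apply: ler_wpM2l; [exact: ltW | lra].
  have h2 : et * (CH * D) <= et * D0 by apply: ler_wpM2l => //; exact: ltW.
  have := Gb xx Xxx; lra.
have Hb : forall xx, Q xx -> inner_prod (H xx) (ybar - xx) <= eps.
  move=> xx Qxx.
  have hF : 0 <= inner_prod (F xx) (ybar - xx) by case: Qxx => _ /(_ _ Xyb).
  have hx1 : et * inner_prod (H xx) (ybar - xx) <= inner_prod (G xx) (ybar - xx).
    by rewrite /G ipDl ipZl; lra.
  have hx2 := ler_wpM2l (mulr_ge0 (ler0n R 2) (ltW Lam0)) hx1.
  have hx3 := ler_wpM2l (ltW D00) (le_trans hx2 (key xx (QX _ Qxx))).
  have e3 : D0 * (2 * Lam * (et * inner_prod (H xx) (ybar - xx))) = Lam * eps * inner_prod (H xx) (ybar - xx).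
    by rewrite /et; field; rewrite gt_eqF.
  rewrite -(ler_pM2l (mulr_gt0 Lam0 eps0)); lra.
have gF1 : gap_fn ybar F X <= eps.
  exact: (@sup_img_le R _ X (fun v => inner_prod (F v) (ybar - v)) eps Xne Fb).
have gF0 : 0 <= gap_fn ybar F X.
  have := @sup_img_ub R _ X (fun v => inner_prod (F v) (ybar - v)) eps Fb ybar Xyb.
  by rewrite subrr ip0r.
have gH1 : gap_fn ybar H Q <= eps.
  exact: (@sup_img_le R _ Q (fun v => inner_prod (H v) (ybar - v)) eps Qne Hb).
have gHv := @sup_img_ub R _ Q (fun v => inner_prod (H v) (ybar - v)) eps Hb.
have low : forall v, Q v -> - BH * enorm (ybar - v) <= gap_fn ybar H Q.
  move=> v Qv; apply: le_trans (gHv v Qv).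
  have := CSabs (H v) (ybar - v); rewrite ler_norml => /andP[hl _].
  have : enorm (H v) * enorm (ybar - v) <= BH * enorm (ybar - v).
    by apply: ler_wpM2r; rewrite ?enorm_ge0 ?hBH.
  lra.
have gH0 : - BH * dist_set ybar Q <= gap_fn ybar H Q.
  have [BHz|BHp] := eqVneq BH 0.
    by have := low q0 Qq0; rewrite BHz !oppr0 !mul0r.
  have BHpos : 0 < BH by rewrite lt_def BHp BH0.
  have hd : - gap_fn ybar H Q / BH <= dist_set ybar Q.
    apply: (@inf_img_ge R _ Q (fun v => enorm (ybar - v))) => // v Qv.
    rewrite ler_pdivrMr //; have := low v Qv; lra.
  have := ler_wpM2l BH0 hd.
  have -> : BH * (- gap_fn ybar H Q / BH) = - gap_fn ybar H Q by field; rewrite BHp.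
  lra.
split => //.
move=> sigma M s0 M1 ws.
pose d := dist_set ybar Q.
have d0 : 0 <= d.
  by apply: (@inf_img_ge R _ Q (fun v => enorm (ybar - v))) => // v Qv; apply: enorm_ge0.
have hws := ws q0 ybar Qq0 Xyb.
have hle : sigma * d `^ M <= eps by apply: le_trans hws _; apply: Fb; apply: QX.
have M0 : 0 < M by lra.
have iM0 : 0 <= 1 / M by rewrite divr_ge0 // ltW.
have hp := @ge0_ler_powR R (1 / M) iM0 (sigma * d `^ M) eps.
rewrite !nnegrE in hp.
have {}hp := hp (mulr_ge0 (ltW s0) (powR_ge0 _ _)) (ltW eps0) hle.
rewrite powRM ?powR_ge0 ?(ltW s0) // -powRrM in hp.
have e1M : M * (1 / M) = 1 by field; rewrite gt_eqF.
rewrite e1M in hp.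
rewrite powRr1 // in hp.
have sp := @powR_gt0 R sigma (1 / M) s0.
have hd : d <= eps `^ (1 / M) / sigma `^ (1 / M).
  by rewrite ler_pdivlMr // mulrC.
have := ler_wpM2l BH0 hd.
have -> : - (BH / sigma `^ (1 / M)) * eps `^ (1 / M) = - (BH * (eps `^ (1 / M) / sigma `^ (1 / M))).
  by rewrite mulrA mulrAC mulNr.
lra.
Qed.
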